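(* Let $K>0$ and $V(x)=Ke^{2ix}$. Then for every $x\in(0,\pi)$, every $j\in\mathbb{N}$, $k\in\mathbb{N}_0$ and $m\in\mathbb{N}_0$, we have $\mu_j(x)\ne E_m$ and $\nu_k(x)\ne E_m$.
   Context: For $x_0\in\mathbb{R}$, let $c(\lambda,x_0,\cdot)$, $s(\lambda,x_0,\cdot)$ be the solutions of $-\psi''(x)+Ke^{2ix}\psi(x)=\lambda\psi(x)$ with $c(\lambda,x_0,x_0)=1$, $c'(\lambda,x_0,x_0)=0$, $s(\lambda,x_0,x_0)=0$, $s'(\lambda,x_0,x_0)=1$. The Dirichlet eigenvalues $\mu_j(x_0)$, $j\in\mathbb{N}$, are the zeros of $\lambda\mapsto s(\lambda,x_0,x_0+\pi)$ and the Neumann eigenvalues $\nu_k(x_0)$, $k\in\mathbb{N}_0$, are the zeros of $\lambda\mapsto c'(\lambda,x_0,x_0+\pi)$, each listed with multiplicity in order of non-decreasing modulus. The numbers $E_m$, $m\in\mathbb{N}_0$, are the zeros of $\Delta(\lambda)^2-1$ with $\Delta$ the Floquet discriminant; for this potential $\Delta(\lambda)=\cos(\pi\sqrt\lambda)$, so $E_0=0$ and $E_{2m-1}=E_{2m}=m^2$, $m\in\mathbb{N}$. *)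

(* Defs.v *)
From Stdlib Require Import Reals.
From Coquelicot Require Import Coquelicot.
Open Scope R_scope.

Definition cexpi (t : R) : C := (cos t, sin t).

Definition V (K : R) (x : R) : C := (RtoC K * cexpi (2 * x))%C.

Definition is_solution (K : R) (lam : C) (psi d1 d2 : R -> C) : Prop :=
  (forall x, is_derive psi x (d1 x)) /\
  (forall x, is_derive d1 x (d2 x)) /\
  (forall x, (- d2 x + V K x * psi x)%C = (lam * psi x)%C).

Definition is_s_solution (K : R) (lam : C) (x0 : R) (psi d1 d2 : R -> C) : Prop :=
  is_solution K lam psi d1 d2 /\ psi x0 = 0%C /\ d1 x0 = 1%C.

Definition is_c_solution (K : R) (lam : C) (x0 : R) (psi d1 d2 : R -> C) : Prop :=
  is_solution K lam psi d1 d2 /\ psi x0 = 1%C /\ d1 x0 = 0%C.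

Definition dirichlet_eigenvalue (K : R) (x0 : R) (lam : C) : Prop :=
  exists psi d1 d2, is_s_solution K lam x0 psi d1 d2 /\ psi (x0 + PI) = 0%C.

Definition neumann_eigenvalue (K : R) (x0 : R) (lam : C) : Prop :=
  exists psi d1 d2, is_c_solution K lam x0 psi d1 d2 /\ d1 (x0 + PI) = 0%C.

(* E_m, m in N_0: zeros of Delta^2 - 1 with Delta(lam) = cos(pi sqrt lam):
   E_0 = 0, E_{2m-1} = E_{2m} = m^2.  Indexed by m : nat. *)
Definition E (m : nat) : C := RtoC (INR ((S m) / 2) ^ 2).

(* Main.v *)
Require Import Defs.
From Stdlib Require Import Reals.
From Coquelicot Require Import Coquelicot.
Open Scope R_scope.
From Stdlib Require Import Lra Lia Factorial.

Lemma CD_split (f : R -> C) (x : R) (l : C) :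
  is_derive (fun t => fst (f t)) x (fst l) ->
  is_derive (fun t => snd (f t)) x (snd l) ->
  is_derive f x l.
Proof.
  intros H1 H2.
  unfold is_derive in *.
  pose proof (filterdiff_comp'_2 (K:=R_AbsRing) (T:=R_NormedModule) (U:=R_NormedModule) (V:=R_NormedModule) (W:=C_R_NormedModule)
   (fun t => fst (f t)) (fun t => snd (f t)) (fun a b => (a,b) : C) x _ _ (fun a b => (a,b) : C) H1 H2) as H.
  assert (Hf : forall t, ((fst (f t), snd (f t)) : C) = f t) by (intro t; destruct (f t); reflexivity).
  eapply filterdiff_ext_lin.
  eapply filterdiff_ext. 2: apply H.
  - intros; simpl. apply Hf.
  - apply (filterdiff_linear (K:=R_AbsRing) (U:=prod_NormedModule R_AbsRing R_NormedModule R_NormedModule) (V:=C_R_NormedModule) (fun t => (fst t, snd t) : C)).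
    apply is_linear_prod; [apply is_linear_fst | apply is_linear_snd].
  - intros y. simpl. destruct l; reflexivity.
Qed.

Lemma CD_fst (f : R -> C) (x : R) (l : C) :
  is_derive f x l -> is_derive (fun t => fst (f t)) x (fst l).
Proof.
  intros H. unfold is_derive in *.
  pose proof (filterdiff_comp' (K:=R_AbsRing) (U:=R_NormedModule) (V:=C_R_NormedModule) (W:=R_NormedModule) f (fun t => fst t) x _ _ H
     (filterdiff_linear _ (is_linear_fst (U:=R_NormedModule) (V:=R_NormedModule)))) as H'.
  exact H'.
Qed.

Lemma CD_snd (f : R -> C) (x : R) (l : C) :
  is_derive f x l -> is_derive (fun t => snd (f t)) x (snd l).
Proof.
  intros H. unfold is_derive in *.
  exact (filterdiff_comp' (K:=R_AbsRing) (U:=R_NormedModule) (V:=C_R_NormedModule) (W:=R_NormedModule) f (fun t => snd t) x _ _ H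
     (filterdiff_linear _ (is_linear_snd (U:=R_NormedModule) (V:=R_NormedModule)))).
Qed.

Lemma is_derive_eq {f : R -> R} {x : R} {l : R} (l' : R) : is_derive f x l -> l = l' -> is_derive f x l'.
Proof. intros H ->; exact H. Qed.
Lemma is_derive_eqC {f : R -> C} {x : R} {l : C} (l' : C) : is_derive f x l -> l = l' -> is_derive f x l'.
Proof. intros H ->; exact H. Qed.

Lemma RD_mult (f g : R -> R) (x : R) (a b : R) : is_derive f x a -> is_derive g x b ->
  is_derive (fun t => f t * g t) x (a * g x + f x * b).
Proof. intros Ha Hb. exact (is_derive_mult f g x a b Ha Hb Rmult_comm). Qed.
Lemma RD_plus (f g : R -> R) (x : R) (a b : R) : is_derive f x a -> is_derive g x b ->
  is_derive (fun t => f t + g t) x (a + b).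
Proof. intros Ha Hb. exact (is_derive_plus f g x a b Ha Hb). Qed.
Lemma RD_minus (f g : R -> R) (x : R) (a b : R) : is_derive f x a -> is_derive g x b ->
  is_derive (fun t => f t - g t) x (a - b).
Proof. intros Ha Hb. exact (is_derive_minus f g x a b Ha Hb). Qed.

Lemma CD_mult (f g : R -> C) (x : R) (a b : C) : is_derive f x a -> is_derive g x b ->
  is_derive (fun t => Cmult (f t) (g t)) x (a * g x + f x * b)%C.
Proof.
  intros Ha Hb.
  pose proof (CD_fst _ _ _ Ha) as Ha1. pose proof (CD_snd _ _ _ Ha) as Ha2.
  pose proof (CD_fst _ _ _ Hb) as Hb1. pose proof (CD_snd _ _ _ Hb) as Hb2.
  apply CD_split; simpl.
  - eapply is_derive_eq. apply RD_minus; apply RD_mult; eauto. simpl; ring.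
  - eapply is_derive_eq. apply RD_plus; apply RD_mult; eauto. simpl; ring.
Qed.

Lemma CD_plus (f g : R -> C) (x : R) (a b : C) : is_derive f x a -> is_derive g x b ->
  is_derive (fun t => Cplus (f t) (g t)) x (a + b)%C.
Proof.
  intros Ha Hb.
  pose proof (CD_fst _ _ _ Ha) as Ha1. pose proof (CD_snd _ _ _ Ha) as Ha2.
  pose proof (CD_fst _ _ _ Hb) as Hb1. pose proof (CD_snd _ _ _ Hb) as Hb2.
  apply CD_split; simpl; apply RD_plus; auto.
Qed.

Lemma CD_minus (f g : R -> C) (x : R) (a b : C) : is_derive f x a -> is_derive g x b ->
  is_derive (fun t => Cminus (f t) (g t)) x (a - b)%C.
Proof.
  intros Ha Hb.
  pose proof (CD_fst _ _ _ Ha) as Ha1. pose proof (CD_snd _ _ _ Ha) as Ha2.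
  pose proof (CD_fst _ _ _ Hb) as Hb1. pose proof (CD_snd _ _ _ Hb) as Hb2.
  apply CD_split; simpl; apply RD_minus; auto.
Qed.

Lemma CD_const (c : C) (x : R) : is_derive (fun _ : R => c) x (RtoC 0).
Proof.
  apply CD_split; simpl.
  - apply (is_derive_const (K:=R_AbsRing) (V:=R_NormedModule)).
  - apply (is_derive_const (K:=R_AbsRing) (V:=R_NormedModule)).
Qed.

Lemma CD_scal (c : C) (f : R -> C) (x : R) (a : C) : is_derive f x a ->
  is_derive (fun t => Cmult c (f t)) x (c * a)%C.
Proof.
  intros H. eapply is_derive_eqC. apply (CD_mult _ _ x _ _ (CD_const c x) H).
  ring.
Qed.

Lemma CD_RtoC (f : R -> R) (x : R) (a : R) : is_derive f x a -> is_derive (fun t => RtoC (f t)) x (RtoC a).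
Proof.
  intros H. apply CD_split; simpl. exact H.
  apply (is_derive_const (K:=R_AbsRing) (V:=R_NormedModule)).
Qed.

Lemma CD_conj (f : R -> C) (x : R) (a : C) : is_derive f x a -> is_derive (fun t => Cconj (f t)) x (Cconj a).
Proof.
  intros H. apply CD_split; simpl. exact (CD_fst _ _ _ H).
  apply (is_derive_opp (K:=R_AbsRing) (V:=R_NormedModule)). exact (CD_snd _ _ _ H).
Qed.

Lemma cexpi_add a b : cexpi (a + b) = (cexpi a * cexpi b)%C.
Proof. unfold cexpi, Cmult; simpl. rewrite cos_plus, sin_plus. f_equal; ring. Qed.

Lemma cexpi_0 : cexpi 0 = RtoC 1.
Proof. unfold cexpi, RtoC. rewrite cos_0, sin_0. reflexivity. Qed.

Lemma cexpi_opp a : cexpi (- a) = Cconj (cexpi a).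
Proof. unfold cexpi, Cconj; simpl. rewrite cos_neg, sin_neg. reflexivity. Qed.

Lemma Cmod_cexpi a : Cmod (cexpi a) = 1.
Proof. unfold Cmod, cexpi; simpl.
  pose proof (sin2_cos2 a) as H. unfold Rsqr in H.
  replace (cos a * (cos a * 1) + sin a * (sin a * 1)) with 1 by lra. apply sqrt_1. Qed.

Lemma cexpi_natPI (j : nat) : cexpi (INR j * PI) = RtoC ((-1) ^ j).
Proof.
  induction j.
  - simpl. rewrite Rmult_0_l. apply cexpi_0.
  - rewrite S_INR, Rmult_plus_distr_r, Rmult_1_l, cexpi_add, IHj.
    unfold cexpi. rewrite cos_PI, sin_PI. unfold RtoC, Cmult; simpl. f_equal; ring.
Qed.

Lemma CD_cexpi (p x : R) : is_derive (fun t => cexpi (p * t)) x (Ci * RtoC p * cexpi (p * x))%C.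
Proof.
  apply CD_split; unfold cexpi; simpl.
  - eapply is_derive_eq. auto_derive; auto. ring.
  - eapply is_derive_eq. auto_derive; auto. ring.
Qed.

Lemma CD_id (x : R) : is_derive (fun t : R => RtoC t) x (RtoC 1).
Proof. apply CD_RtoC. apply (is_derive_id (K:=R_AbsRing)). Qed.

Lemma Cmod_le_2max (z : C) M : Rabs (fst z) <= M -> Rabs (snd z) <= M -> Cmod z <= 2 * M.
Proof.
  intros H1 H2. eapply Rle_trans. apply Cmod_2Rmax.
  assert (Rmax (Rabs (fst z)) (Rabs (snd z)) <= M) by (apply Rmax_lub; auto).
  assert (sqrt 2 <= 2). { rewrite <- (sqrt_square 2) at 2 by lra. apply sqrt_le_1_alt. lra. }
  assert (0 <= Rmax (Rabs (fst z)) (Rabs (snd z))) by (eapply Rle_trans; [apply Rabs_pos| apply Rmax_l]).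
  assert (0 <= sqrt 2) by apply sqrt_pos.
  nra.
Qed.

Lemma R_MVT_le (f f' : R -> R) a b M : a <= b -> (forall x, is_derive f x (f' x)) ->
  (forall x, a <= x <= b -> f' x <= M) -> f b - f a <= M * (b - a).
Proof.
  intros Hab Hd HM.
  destruct (MVT_gen f a b f') as [c [Hc E]].
  - intros; apply Hd.
  - intros y _. apply continuity_pt_filterlim. apply (ex_derive_continuous (K:=R_AbsRing) (V:=R_NormedModule)). eexists; apply Hd.
  - rewrite E. rewrite Rmin_left in Hc by lra. rewrite Rmax_right in Hc by lra.
    apply Rmult_le_compat_r. lra. apply HM; lra.
Qed.

Lemma R_MVT_abs (f f' : R -> R) a b M : a <= b -> (forall x, is_derive f x (f' x)) ->
  (forall x, a <= x <= b -> Rabs (f' x) <= M) -> Rabs (f b - f a) <= M * (b - a).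
Proof.
  intros Hab Hd HM.
  destruct (MVT_gen f a b f') as [c [Hc E]].
  - intros; apply Hd.
  - intros y _. apply continuity_pt_filterlim. apply (ex_derive_continuous (K:=R_AbsRing) (V:=R_NormedModule)). eexists; apply Hd.
  - rewrite E. rewrite Rmin_left in Hc by lra. rewrite Rmax_right in Hc by lra.
    rewrite Rabs_mult, (Rabs_right (b - a)) by lra.
    apply Rmult_le_compat_r. lra. apply HM; lra.
Qed.

Lemma C_MVT (F F' : R -> C) a b M : a <= b -> (forall x, is_derive F x (F' x)) ->
  (forall x, a <= x <= b -> Cmod (F' x) <= M) -> Cmod (F b - F a)%C <= 2 * (M * (b - a)).
Proof.
  intros Hab Hd HM. apply Cmod_le_2max; simpl.
  - apply (R_MVT_abs (fun t => fst (F t)) (fun t => fst (F' t))); auto.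
    intros; apply CD_fst; auto.
    intros x Hx. eapply Rle_trans. eapply Rle_trans; [apply Rmax_l|apply (Rmax_Cmod (F' x))]. auto.
  - apply (R_MVT_abs (fun t => snd (F t)) (fun t => snd (F' t))); auto.
    intros; apply CD_snd; auto.
    intros x Hx. eapply Rle_trans. eapply Rle_trans; [apply Rmax_r|apply (Rmax_Cmod (F' x))]. auto.
Qed.

Fixpoint csum (f : nat -> C) (N : nat) : C :=
  match N with O => f O | S N' => Cplus (csum f N') (f N) end.

Lemma csum_ext f g N : (forall k, (k <= N)%nat -> f k = g k) -> csum f N = csum g N.
Proof. induction N; intros H; simpl. apply H; lia. rewrite IHN by (intros; apply H; lia). rewrite H by lia. reflexivity. Qed.

Lemma csum_plus f g N : csum (fun k => Cplus (f k) (g k)) N = Cplus (csum f N) (csum g N).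
Proof. induction N; simpl. reflexivity. rewrite IHN. ring. Qed.

Lemma csum_scal c f N : csum (fun k => Cmult c (f k)) N = Cmult c (csum f N).
Proof. induction N; simpl. reflexivity. rewrite IHN. ring. Qed.

Lemma csum_zero N : csum (fun _ => RtoC 0) N = RtoC 0.
Proof. induction N; simpl. reflexivity. rewrite IHN. ring. Qed.

Lemma Cmod_csum f N : Cmod (csum f N) <= sum_f_R0 (fun k => Cmod (f k)) N.
Proof. induction N; simpl. lra. eapply Rle_trans. apply Cmod_triangle. lra. Qed.

Lemma sum_f_R0_le (f g : nat -> R) N : (forall k, (k <= N)%nat -> f k <= g k) -> sum_f_R0 f N <= sum_f_R0 g N.
Proof. induction N; intros H; simpl. apply H; lia. apply Rplus_le_compat. apply IHN; intros; apply H; lia. apply H; lia. Qed.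

Lemma sum_f_R0_nonneg (f : nat -> R) N : (forall k, 0 <= f k) -> 0 <= sum_f_R0 f N.
Proof. induction N; intros H; simpl. apply H. specialize (IHN H). specialize (H (S N)). lra. Qed.

Lemma CD_csum (F F' : nat -> R -> C) N x : (forall k, is_derive (F k) x (F' k x)) ->
  is_derive (fun t => csum (fun k => F k t) N) x (csum (fun k => F' k x) N).
Proof.
  intros H. induction N; simpl. apply H. apply CD_plus; auto.
Qed.

Lemma sum_exp_le (A : R) N : 0 <= A -> sum_f_R0 (fun k => A ^ k / INR (fact k)) N <= exp A.
Proof.
  intros HA. unfold exp. destruct (exist_exp A) as [l Hl]. simpl.
  assert (E : forall n, sum_f_R0 (fun k => A ^ k / INR (fact k)) n = sum_f_R0 (fun i => / INR (fact i) * A ^ i) n).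
  { intros n. apply sum_eq. intros; unfold Rdiv; ring. }
  rewrite E. apply growing_ineq.
  - intros n. unfold Un_growing. change (sum_f_R0 ?f (S n)) with (sum_f_R0 f n + f (S n)). assert (0 <= / INR (fact (S n)) * A ^ S n). { apply Rmult_le_pos. left; apply Rinv_0_lt_compat, INR_fact_lt_0. apply pow_le; auto. } lra.
  - exact Hl.
Qed.

Ltac ceq := apply injective_projections; unfold Cminus, Cplus, Cmult, Copp, RtoC, cexpi, Ci; cbn [fst snd]; ring.

Definition dd (K : R) (n k : nat) : R := (K/4)^k / (INR (fact k) * INR (fact (k+n))).
Definition cc (K : R) (n k : nat) : R := (-1)^k * dd K n k.
Definition pp (n k : nat) : R := INR (2*k + n).
Definition ee (q x : R) : C := cexpi (q * x).
Definition lam (n : nat) : C := RtoC (INR n ^ 2).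

Definition phi K n N x := csum (fun k => RtoC (cc K n k) * ee (pp n k) x)%C N.
Definition phi1 K n N x := csum (fun k => RtoC (cc K n k) * (Ci * RtoC (pp n k)) * ee (pp n k) x)%C N.
Definition phi2 K n N x := csum (fun k => RtoC (cc K n k) * RtoC (- (pp n k)^2) * ee (pp n k) x)%C N.

Lemma INR_fact_neq0 k : INR (fact k) <> 0.
Proof. apply not_0_INR, fact_neq_0. Qed.

Lemma dd_pos K n k : 0 < K -> 0 < dd K n k.
Proof. intros HK. unfold dd. apply Rdiv_lt_0_compat. apply pow_lt; lra.
  apply Rmult_lt_0_compat; apply INR_fact_lt_0. Qed.

Lemma cc_rec K n k : cc K n (S k) * (4 * INR (S k) * INR (S k + n)) = - K * cc K n k.
Proof.
  unfold cc, dd. replace (S k + n)%nat with (S (k + n)) by lia.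
  rewrite !fact_simpl, !mult_INR.
  pose proof (INR_fact_neq0 k). pose proof (INR_fact_neq0 (k+n)).
  assert (INR (S k) <> 0) by (apply not_0_INR; lia).
  assert (INR (S (k+n)) <> 0) by (apply not_0_INR; lia).
  simpl pow. field. repeat split; auto.
Qed.

Lemma pp_S n k : pp n (S k) = pp n k + 2.
Proof. unfold pp. replace (2 * S k + n)%nat with (S (S (2*k+n))) by lia. rewrite !S_INR. ring. Qed.

Lemma pp_sq n k : pp n (S k) ^ 2 - INR n ^ 2 = 4 * INR (S k) * INR (S k + n).
Proof. unfold pp. rewrite !plus_INR, !mult_INR, !S_INR. simpl. ring. Qed.

Lemma ee_S n k x : ee (pp n (S k)) x = (ee (pp n k) x * cexpi (2 * x))%C.
Proof. unfold ee. rewrite pp_S, <- cexpi_add. f_equal. ring. Qed.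

Lemma phi_ode K n N x :
  (phi K n N x * (V K x - lam n) - phi2 K n N x)%C = (RtoC (K * cc K n N) * ee (pp n (S N)) x)%C.
Proof.
  induction N.
  - unfold phi, phi2, V, lam; simpl csum. rewrite ee_S.
    replace (pp n 0) with (INR n) by (unfold pp; f_equal; lia).
    unfold ee, cexpi. ceq.
  - change (phi K n (S N) x) with (phi K n N x + RtoC (cc K n (S N)) * ee (pp n (S N)) x)%C.
    change (phi2 K n (S N) x) with (phi2 K n N x + RtoC (cc K n (S N)) * RtoC (- (pp n (S N))^2) * ee (pp n (S N)) x)%C.
    transitivity ((phi K n N x * (V K x - lam n) - phi2 K n N x) + RtoC (cc K n (S N)) * ee (pp n (S N)) x * (V K x - lam n)
       + RtoC (cc K n (S N) * pp n (S N) ^ 2) * ee (pp n (S N)) x)%C.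
    { generalize (phi K n N x) (phi2 K n N x) (V K x) (lam n) (ee (pp n (S N)) x). intros. ceq. }
    rewrite IHN.
    rewrite (ee_S n (S N)).
    assert (E1 : cc K n (S N) * pp n (S N) ^ 2 = cc K n (S N) * INR n ^ 2 - K * cc K n N).
    { replace (pp n (S N) ^ 2) with (INR n ^ 2 + 4 * INR (S N) * INR (S N + n)) by (rewrite <- pp_sq; ring).
      rewrite Rmult_plus_distr_l, cc_rec. ring. }
    rewrite E1. unfold V, lam. generalize (ee (pp n (S N)) x). intros. ceq.
Qed.

Lemma CD_ee (q x : R) : is_derive (ee q) x (Ci * RtoC q * ee q x)%C.
Proof. apply CD_cexpi. Qed.

Lemma CD_phi K n N x : is_derive (phi K n N) x (phi1 K n N x).
Proof.
  unfold phi, phi1. apply (CD_csum (fun k t => RtoC (cc K n k) * ee (pp n k) t)%C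
     (fun k t => RtoC (cc K n k) * (Ci * RtoC (pp n k)) * ee (pp n k) t)%C).
  intros k. eapply is_derive_eqC. apply CD_scal. apply CD_ee. ring.
Qed.

Lemma CD_phi1 K n N x : is_derive (phi1 K n N) x (phi2 K n N x).
Proof.
  unfold phi1, phi2. apply (CD_csum (fun k t => RtoC (cc K n k) * (Ci * RtoC (pp n k)) * ee (pp n k) t)%C
    (fun k t => RtoC (cc K n k) * RtoC (- (pp n k)^2) * ee (pp n k) t)%C).
  intros k. eapply is_derive_eqC. apply CD_scal. apply CD_ee. generalize (ee (pp n k) x). intros. ceq.
Qed.

Lemma pow_m1_even k : (-1) ^ (2 * k) = 1.
Proof. rewrite pow_mult. replace ((-1)^2) with 1 by ring. apply pow1. Qed.

Lemma ee_pp_shift n k x : ee (pp n k) (x + PI) = (RtoC ((-1)^n) * ee (pp n k) x)%C.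
Proof.
  unfold ee. rewrite Rmult_plus_distr_l, cexpi_add. unfold pp at 2. rewrite cexpi_natPI.
  rewrite pow_add, pow_m1_even, Rmult_1_l. ring.
Qed.

Definition aa (n j : nat) : R := 2 * INR j - INR n.

Lemma ee_aa_shift n j x : ee (aa n j) (x + PI) = (RtoC ((-1)^n) * ee (aa n j) x)%C.
Proof.
  unfold ee. rewrite Rmult_plus_distr_l, cexpi_add.
  replace (aa n j * PI) with (INR (2 * j) * PI + - (INR n * PI)) by (unfold aa; rewrite mult_INR; simpl; ring).
  rewrite cexpi_add, cexpi_opp, !cexpi_natPI, pow_m1_even. unfold Cconj, RtoC. ceq.
Qed.

Lemma phi_shift K n N x : phi K n N (x + PI) = (RtoC ((-1)^n) * phi K n N x)%C.
Proof.
  unfold phi. rewrite <- csum_scal. apply csum_ext. intros k _. rewrite ee_pp_shift. ring.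
Qed.

Lemma phi1_shift K n N x : phi1 K n N (x + PI) = (RtoC ((-1)^n) * phi1 K n N x)%C.
Proof.
  unfold phi1. rewrite <- csum_scal. apply csum_ext. intros k _. rewrite ee_pp_shift. ring.
Qed.

Section Fourier.
Variables (K : R) (n : nat) (psi d1 d2 : R -> C).
Hypothesis HK : 0 < K.
Hypothesis Hsol : is_solution K (lam n) psi d1 d2.

Lemma d2_eq x : d2 x = (V K x * psi x - lam n * psi x)%C.
Proof.
  destruct Hsol as [_ [_ H]]. specialize (H x).
  transitivity (V K x * psi x - (- d2 x + V K x * psi x))%C. ring. rewrite H. ring.
Qed.

Lemma TF (q q1 q2 : R -> C) x : (forall t, is_derive q t (q1 t)) -> (forall t, is_derive q1 t (q2 t)) ->
  is_derive (fun t => q t * d1 t - q1 t * psi t)%C x (psi x * (q x * (V K x - lam n) - q2 x))%C.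
Proof.
  intros Hq Hq1. destruct Hsol as [H1 [H2 _]].
  eapply is_derive_eqC. apply CD_minus; apply CD_mult; auto.
  rewrite d2_eq. ring.
Qed.

Definition BA N x := (phi K n N x * d1 x - phi1 K n N x * psi x)%C.

Lemma CD_BA N x : is_derive (BA N) x (psi x * (RtoC (K * cc K n N) * ee (pp n (S N)) x))%C.
Proof.
  unfold BA. eapply is_derive_eqC. apply (TF (phi K n N) (phi1 K n N) (phi2 K n N)).
  apply CD_phi. apply CD_phi1. rewrite <- phi_ode. ring.
Qed.

Definition Bexp j x := (ee (aa n j) x * d1 x - (Ci * RtoC (aa n j) * ee (aa n j) x) * psi x)%C.

Lemma aa_S j : aa n (S j) = aa n j + 2.
Proof. unfold aa. rewrite S_INR. ring. Qed.

Lemma CD_Bexp j x : is_derive (Bexp j) x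
   (psi x * (RtoC K * ee (aa n (S j)) x + RtoC (aa n j ^ 2 - INR n ^ 2) * ee (aa n j) x))%C.
Proof.
  unfold Bexp. eapply is_derive_eqC.
  apply (TF (ee (aa n j)) (fun t => Ci * RtoC (aa n j) * ee (aa n j) t)%C
            (fun t => Ci * RtoC (aa n j) * (Ci * RtoC (aa n j) * ee (aa n j) t))%C).
  - intros; apply CD_ee.
  - intros; apply CD_scal, CD_ee.
  - unfold ee. rewrite aa_S, Rmult_plus_distr_r, cexpi_add. unfold V, lam.
    generalize (cexpi (aa n j * x)) (psi x). intros. ceq.
Qed.

Fixpoint G (j : nat) (x : R) : C :=
  match j with
  | O => RtoC 0
  | S j' => (RtoC (/ K) * (Bexp j' x - RtoC (aa n j' ^ 2 - INR n ^ 2) * G j' x))%C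
  end.

Definition Gd (j : nat) (x : R) : C :=
  match j with O => RtoC 0 | S _ => (psi x * ee (aa n j) x)%C end.

Lemma Gd_prop j x : (RtoC (aa n j ^ 2 - INR n ^ 2) * Gd j x = RtoC (aa n j ^ 2 - INR n ^ 2) * (psi x * ee (aa n j) x))%C.
Proof.
  destruct j. 2: reflexivity. cbn [Gd]. replace (aa n 0 ^ 2 - INR n ^ 2) with 0 by (unfold aa; simpl; ring).
  generalize (psi x) (ee (aa n 0) x). intros. ceq.
Qed.

Lemma CD_G j x : is_derive (G j) x (Gd j x).
Proof.
  induction j.
  - simpl. apply CD_const.
  - cbn [G]. eapply is_derive_eqC. apply CD_scal. apply CD_minus. apply CD_Bexp. apply CD_scal. apply IHj.
    rewrite Gd_prop. cbn [Gd].
    assert (K <> 0) by lra.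
    generalize (psi x) (ee (aa n (S j)) x) (ee (aa n j) x). intros.
    apply injective_projections; unfold Cminus, Cplus, Cmult, Copp, RtoC; cbn [fst snd]; field; auto.
Qed.

Lemma G_periodic x0 : (forall j, Bexp j (x0 + PI) = Bexp j x0) -> forall j, G j (x0 + PI) = G j x0.
Proof. intros H j. induction j; simpl. reflexivity. rewrite H, IHj. reflexivity. Qed.

Definition HH N x := csum (fun k => RtoC (cc K n k) * (Ci * RtoC (pp n k)) * G (k + n) x)%C N.

Lemma CD_HH N x : is_derive (HH N) x (psi x * phi1 K n N x)%C.
Proof.
  unfold HH. eapply is_derive_eqC.
  apply (CD_csum (fun k t => RtoC (cc K n k) * (Ci * RtoC (pp n k)) * G (k + n) t)%C
                 (fun k t => RtoC (cc K n k) * (Ci * RtoC (pp n k)) * Gd (k + n) t)%C).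
  - intros k. apply CD_scal. apply CD_G.
  - unfold phi1. rewrite <- csum_scal. apply csum_ext. intros k _.
    destruct (k + n)%nat eqn:E.
    + assert (k = 0%nat /\ n = 0%nat) as [-> ->] by lia.
      replace (pp 0 0) with 0 by (unfold pp; simpl; ring). simpl. ceq.
    + simpl Gd. rewrite <- E.
      replace (aa n (k + n)) with (pp n k) by (unfold aa, pp; rewrite !plus_INR, mult_INR; simpl; ring).
      ring.
Qed.

Lemma HH_periodic x0 : (forall j, Bexp j (x0 + PI) = Bexp j x0) -> forall N, HH N (x0 + PI) = HH N x0.
Proof. intros H N. unfold HH. apply csum_ext. intros k _. rewrite G_periodic; auto. Qed.

Definition BQ N x := (RtoC x * phi K n N x * d1 x - (phi K n N x + RtoC x * phi1 K n N x) * psi x)%C.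

Lemma CD_BQ N x : is_derive (BQ N) x (psi x * (RtoC x * (RtoC (K * cc K n N) * ee (pp n (S N)) x) - RtoC 2 * phi1 K n N x))%C.
Proof.
  unfold BQ. eapply is_derive_eqC.
  apply (TF (fun t => RtoC t * phi K n N t)%C (fun t => phi K n N t + RtoC t * phi1 K n N t)%C
            (fun t => RtoC 2 * phi1 K n N t + RtoC t * phi2 K n N t)%C).
  - intros t. eapply is_derive_eqC. apply CD_mult. apply CD_id. apply CD_phi. ring.
  - intros t. eapply is_derive_eqC. apply CD_plus. apply CD_phi. apply CD_mult. apply CD_id. apply CD_phi1.
    apply injective_projections; unfold Cminus, Cplus, Cmult, Copp, RtoC; cbn [fst snd]; ring.
  - rewrite <- phi_ode. apply injective_projections; unfold Cminus, Cplus, Cmult, Copp, RtoC; cbn [fst snd]; ring.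
Qed.

Definition FF N x := (BQ N x + RtoC 2 * HH N x)%C.

Lemma CD_FF N x : is_derive (FF N) x (psi x * (RtoC x * (RtoC (K * cc K n N) * ee (pp n (S N)) x)))%C.
Proof.
  unfold FF. eapply is_derive_eqC. apply CD_plus. apply CD_BQ. apply CD_scal. apply CD_HH. ring.
Qed.

End Fourier.

Lemma sqrt_le_1plus s : 0 <= s -> sqrt s <= 1 + s.
Proof. intros Hs. pose proof (sqrt_sqrt s Hs). pose proof (sqrt_pos s). nra. Qed.

Lemma psi_bound (psi d1 : R -> C) a b : a <= b -> (forall x, is_derive psi x (d1 x)) ->
  exists M, 0 <= M /\ forall x, a <= x <= b -> Cmod (psi x) <= M.
Proof.
  intros Hab Hd.
  set (g := fun t => fst (psi t) * fst (psi t) + snd (psi t) * snd (psi t)).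
  assert (Hg : forall t, is_derive g t (fst (d1 t) * fst (psi t) + fst (psi t) * fst (d1 t)
                + (snd (d1 t) * snd (psi t) + snd (psi t) * snd (d1 t)))).
  { intros t. unfold g. apply RD_plus; apply RD_mult; first [apply CD_fst | apply CD_snd]; auto. }
  destruct (continuity_ab_maj g a b Hab) as [Mx [HM _]].
  { intros c _. apply continuity_pt_filterlim. apply (ex_derive_continuous (K:=R_AbsRing) (V:=R_NormedModule)). eexists; apply Hg. }
  exists (1 + g Mx). split.
  - unfold g. nra.
  - intros x Hx. specialize (HM x Hx). unfold Cmod.
    eapply Rle_trans. apply sqrt_le_1plus. nra.
    fold g in HM. unfold g in *. simpl. nra.
Qed.

Lemma Cmod_ee q x : Cmod (ee q x) = 1.
Proof. apply Cmod_cexpi. Qed.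

Section FourierEnd.
Variables (K : R) (n : nat) (psi d1 d2 : R -> C) (x0 : R).
Hypothesis HK : 0 < K.
Hypothesis Hx0 : 0 < x0.
Hypothesis Hsol : is_solution K (lam n) psi d1 d2.
Variable M : R.
Hypothesis HM0 : 0 <= M.
Hypothesis HM : forall x, x0 <= x <= x0 + PI -> Cmod (psi x) <= M.

Lemma stepA N : Cmod (BA K n psi d1 N (x0 + PI) - BA K n psi d1 N x0)%C <= 2 * (M * (K * Rabs (cc K n N)) * PI).
Proof.
  replace (2 * (M * (K * Rabs (cc K n N)) * PI)) with (2 * (M * (K * Rabs (cc K n N)) * (x0 + PI - x0))) by ring.
  apply (C_MVT _ (fun x => psi x * (RtoC (K * cc K n N) * ee (pp n (S N)) x))%C). pose proof PI_RGT_0; lra.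
  intros; apply (CD_BA K n psi d1 d2); auto.
  intros x Hx. rewrite !Cmod_mult, Cmod_R, Cmod_ee, Rabs_mult, (Rabs_right K) by lra.
  rewrite Rmult_1_r. apply Rmult_le_compat_r. apply Rmult_le_pos; [lra|apply Rabs_pos]. auto.
Qed.

Lemma stepC N : (forall j, Bexp n psi d1 j (x0 + PI) = Bexp n psi d1 j x0) ->
  Cmod (BQ K n psi d1 N (x0 + PI) - BQ K n psi d1 N x0)%C <= 2 * (M * ((x0 + PI) * (K * Rabs (cc K n N))) * PI).
Proof.
  intros Hper.
  replace (BQ K n psi d1 N (x0 + PI) - BQ K n psi d1 N x0)%C
     with (FF K n psi d1 N (x0 + PI) - FF K n psi d1 N x0)%C.
  2:{ unfold FF. rewrite (HH_periodic K n psi d1 x0 Hper). ring. }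
  replace (2 * (M * ((x0 + PI) * (K * Rabs (cc K n N))) * PI)) with (2 * (M * ((x0 + PI) * (K * Rabs (cc K n N))) * (x0 + PI - x0))) by ring.
  apply (C_MVT _ (fun x => psi x * (RtoC x * (RtoC (K * cc K n N) * ee (pp n (S N)) x)))%C). pose proof PI_RGT_0; lra.
  intros; apply (CD_FF K n psi d1 d2); auto.
  intros x Hx. rewrite !Cmod_mult, !Cmod_R, Cmod_ee, Rabs_mult, (Rabs_right K) by lra.
  rewrite Rmult_1_r. apply Rmult_le_compat. apply Cmod_ge_0.
  apply Rmult_le_pos. apply Rabs_pos. apply Rmult_le_pos; [lra|apply Rabs_pos].
  auto. apply Rmult_le_compat_r. apply Rmult_le_pos; [lra|apply Rabs_pos].
  rewrite Rabs_right by lra. lra.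
Qed.

End FourierEnd.


Lemma div_bound (a b c : R) : 0 < b -> a * b <= c -> a <= c / b.
Proof. intros Hb H. apply Rmult_le_reg_r with b; auto. unfold Rdiv. rewrite Rmult_assoc, Rinv_l by lra. lra. Qed.

Lemma fourier_D K n psi d1 d2 x0 : 0 < K -> 0 < x0 -> is_solution K (lam n) psi d1 d2 ->
  psi x0 = RtoC 0 -> d1 x0 = RtoC 1 -> psi (x0 + PI) = RtoC 0 ->
  exists Cst, forall N, Cmod (phi K n N x0) <= Cst * Rabs (cc K n N).
Proof.
  intros HK Hx0 Hsol Hp0 Hd0 HpP.
  assert (Hd : forall x, is_derive psi x (d1 x)) by apply Hsol. pose proof PI_RGT_0 as HPI.
  destruct (psi_bound psi d1 x0 (x0 + PI)) as [M [HM0 HM]]; auto. pose proof PI_RGT_0; lra.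
  set (s := RtoC ((-1)^n)).
  set (beta := (s * d1 (x0 + PI)%R)%C).
  assert (EA : forall N, (BA K n psi d1 N (x0 + PI) - BA K n psi d1 N x0)%C = (phi K n N x0 * (beta - RtoC 1))%C).
  { intros N. unfold BA. rewrite phi_shift, phi1_shift, Hp0, Hd0, HpP. unfold beta, s. ring. }
  destruct (Ceq_dec beta (RtoC 1)) as [Eb | Nb].
  - assert (Hper : forall j, Bexp n psi d1 j (x0 + PI) = Bexp n psi d1 j x0).
    { intros j. unfold Bexp. rewrite ee_aa_shift, Hp0, Hd0, HpP.
      transitivity (ee (aa n j) x0 * beta - Ci * RtoC (aa n j) * (s * ee (aa n j) x0) * RtoC 0)%C.
      unfold beta, s; ring. rewrite Eb. ring. }
    exists (2 * M * (x0 + PI) * K). intros N.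
    pose proof (stepC K n psi d1 d2 x0 HK Hx0 Hsol M HM N Hper) as H.
    assert (EC : (BQ K n psi d1 N (x0 + PI) - BQ K n psi d1 N x0)%C = (RtoC PI * phi K n N x0)%C).
    { unfold BQ. rewrite phi_shift, phi1_shift, Hp0, Hd0, HpP.
      transitivity (RtoC (x0 + PI) * phi K n N x0 * beta - RtoC x0 * phi K n N x0)%C.
      unfold beta, s. ring. rewrite Eb. generalize (phi K n N x0). intros. ceq. }
    rewrite EC, Cmod_mult, Cmod_R, Rabs_right in H by lra.
    assert (Cmod (phi K n N x0) <= (2 * (M * ((x0 + PI) * (K * Rabs (cc K n N))) * PI)) / PI) by (apply div_bound; lra).
    replace (2 * M * (x0 + PI) * K * Rabs (cc K n N)) with ((2 * (M * ((x0 + PI) * (K * Rabs (cc K n N))) * PI)) / PI) by (field; lra).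
    auto.
  - assert (Hb : 0 < Cmod (beta - RtoC 1)%C) by (apply Cmod_gt_0; intro E; apply Nb; apply Ceq_minus; auto).
    exists (2 * M * K * PI / Cmod (beta - RtoC 1)%C). intros N.
    pose proof (stepA K n psi d1 d2 x0 HK Hsol M HM N) as H.
    rewrite EA, Cmod_mult in H.
    apply div_bound in H; auto.
    replace (2 * M * K * PI / Cmod (beta - RtoC 1) * Rabs (cc K n N)) with (2 * (M * (K * Rabs (cc K n N)) * PI) / Cmod (beta - RtoC 1)) by (field; lra).
    auto.
Qed.

Lemma fourier_N K n psi d1 d2 x0 : 0 < K -> 0 < x0 -> is_solution K (lam n) psi d1 d2 ->
  psi x0 = RtoC 1 -> d1 x0 = RtoC 0 -> d1 (x0 + PI) = RtoC 0 ->
  exists Cst, forall N, Cmod (phi1 K n N x0) <= Cst * Rabs (cc K n N).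
Proof.
  intros HK Hx0 Hsol Hp0 Hd0 HdP.
  assert (Hd : forall x, is_derive psi x (d1 x)) by apply Hsol. pose proof PI_RGT_0 as HPI.
  destruct (psi_bound psi d1 x0 (x0 + PI)) as [M [HM0 HM]]; auto. pose proof PI_RGT_0; lra.
  set (s := RtoC ((-1)^n)).
  set (beta := (s * psi (x0 + PI)%R)%C).
  assert (EA : forall N, (BA K n psi d1 N (x0 + PI) - BA K n psi d1 N x0)%C = (phi1 K n N x0 * (RtoC 1 - beta))%C).
  { intros N. unfold BA. rewrite phi_shift, phi1_shift, Hp0, Hd0, HdP. unfold beta, s. ring. }
  destruct (Ceq_dec beta (RtoC 1)) as [Eb | Nb].
  - assert (Hper : forall j, Bexp n psi d1 j (x0 + PI) = Bexp n psi d1 j x0).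
    { intros j. unfold Bexp. rewrite ee_aa_shift, Hp0, Hd0, HdP.
      transitivity (RtoC 0 - Ci * RtoC (aa n j) * ee (aa n j) x0 * beta)%C.
      unfold beta, s; ring. rewrite Eb. ring. }
    exists (2 * M * (x0 + PI) * K). intros N.
    pose proof (stepC K n psi d1 d2 x0 HK Hx0 Hsol M HM N Hper) as H.
    assert (EC : (BQ K n psi d1 N (x0 + PI) - BQ K n psi d1 N x0)%C = (- (RtoC PI * phi1 K n N x0))%C).
    { unfold BQ. rewrite phi_shift, phi1_shift, Hp0, Hd0, HdP.
      transitivity (- ((phi K n N x0 + RtoC (x0 + PI) * phi1 K n N x0) * beta) + (phi K n N x0 + RtoC x0 * phi1 K n N x0))%C.
      unfold beta, s. ring. rewrite Eb. generalize (phi K n N x0) (phi1 K n N x0). intros. ceq. }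
    rewrite EC, Cmod_opp, Cmod_mult, Cmod_R, Rabs_right in H by lra.
    assert (Cmod (phi1 K n N x0) <= (2 * (M * ((x0 + PI) * (K * Rabs (cc K n N))) * PI)) / PI) by (apply div_bound; lra).
    replace (2 * M * (x0 + PI) * K * Rabs (cc K n N)) with ((2 * (M * ((x0 + PI) * (K * Rabs (cc K n N))) * PI)) / PI) by (field; lra).
    auto.
  - assert (Hb : 0 < Cmod (RtoC 1 - beta)%C).
    { apply Cmod_gt_0; intro E; apply Nb. symmetry. apply Ceq_minus; auto. }
    exists (2 * M * K * PI / Cmod (RtoC 1 - beta)%C). intros N.
    pose proof (stepA K n psi d1 d2 x0 HK Hsol M HM N) as H.
    rewrite EA, Cmod_mult in H.
    apply div_bound in H; auto.
    replace (2 * M * K * PI / Cmod (RtoC 1 - beta) * Rabs (cc K n N)) with (2 * (M * (K * Rabs (cc K n N)) * PI) / Cmod (RtoC 1 - beta)) by (field; lra).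
    auto.
Qed.

Lemma csum_shift f N : csum f (S N) = Cplus (f O) (csum (fun k => f (S k)) N).
Proof. induction N. simpl. reflexivity. change (csum f (S (S N))) with (Cplus (csum f (S N)) (f (S (S N)))).
  rewrite IHN. simpl. ring. Qed.

Lemma sum_shift (f : nat -> R) N : sum_f_R0 f (S N) = f O + sum_f_R0 (fun k => f (S k)) N.
Proof. induction N. simpl. ring. change (sum_f_R0 f (S (S N))) with (sum_f_R0 f (S N) + f (S (S N))).
  rewrite IHN. simpl. ring. Qed.

Lemma sum_scal_l (c : R) (f : nat -> R) N : sum_f_R0 (fun k => c * f k) N = c * sum_f_R0 f N.
Proof. induction N; simpl. ring. rewrite IHN. ring. Qed.

Lemma INR_le_pow2 k : INR k <= 2 ^ k.
Proof. induction k. simpl; lra. rewrite S_INR. simpl. assert (1 <= 2 ^ k) by (apply pow_R1_Rle; lra). lra. Qed.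

Section Bessel.
Variables (K : R) (n : nat) (x0 : R).
Hypothesis HK : 0 < K.

Definition om k := (RtoC (cc K n k) * ee (pp n k) x0)%C.
Definition zz := (RtoC K * cexpi (2 * x0))%C.

Lemma Rabs_cc k : Rabs (cc K n k) = dd K n k.
Proof. unfold cc. rewrite Rabs_mult, pow_1_abs, Rabs_right. ring. left; apply dd_pos; auto. Qed.

Lemma Cmod_om k : Cmod (om k) = dd K n k.
Proof. unfold om. rewrite Cmod_mult, Cmod_R, Rabs_cc, Cmod_ee. ring. Qed.

Lemma om_rec k : (om (S k) * RtoC (4 * INR (S k) * INR (S k + n)) = - zz * om k)%C.
Proof.
  unfold om, zz. rewrite ee_S.
  transitivity (RtoC (cc K n (S k) * (4 * INR (S k) * INR (S k + n))) * ee (pp n k) x0 * cexpi (2 * x0))%C.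
  { generalize (ee (pp n k) x0) (cexpi (2 * x0)). intros. ceq. }
  rewrite cc_rec. generalize (ee (pp n k) x0) (cexpi (2 * x0)). intros. ceq.
Qed.

Lemma dd_le k : dd K n k <= (K/4)^k / INR (fact k).
Proof.
  unfold dd. unfold Rdiv. apply Rmult_le_compat_l. apply pow_le; lra.
  rewrite Rinv_mult. rewrite <- (Rmult_1_r (/ INR (fact k))) at 2.
  apply Rmult_le_compat_l. left; apply Rinv_0_lt_compat, INR_fact_lt_0.
  rewrite <- Rinv_1. apply Rinv_le_contravar. lra.
  pose proof (lt_O_fact (k+n)). apply (le_INR 1). lia.
Qed.

Definition Sb := exp (K/4).
Definition Sb' := 2 * exp (K/2).

Lemma sum_dd N : sum_f_R0 (dd K n) N <= Sb.
Proof.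
  eapply Rle_trans. apply sum_f_R0_le with (g := fun k => (K/4)^k / INR (fact k)). intros; apply dd_le.
  apply sum_exp_le. lra.
Qed.

Lemma sum_dd' N : sum_f_R0 (fun k => INR (2 * k) * dd K n k) N <= Sb'.
Proof.
  eapply Rle_trans. apply sum_f_R0_le with (g := fun k => 2 * ((K/2)^k / INR (fact k))).
  - intros k _. rewrite mult_INR. simpl INR at 1.
    replace ((K/2)^k) with (2^k * (K/4)^k) by (rewrite <- Rpow_mult_distr; f_equal; field).
    pose proof (dd_le k). pose proof (INR_le_pow2 k). pose proof (pos_INR k).
    pose proof (dd_pos K n k HK).
    assert (0 < (K/4)^k / INR (fact k)) by (apply Rdiv_lt_0_compat; [apply pow_lt; lra| apply INR_fact_lt_0]).
    unfold Rdiv in *. rewrite Rmult_assoc.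
    replace (2 * (2 ^ k * (K / 4) ^ k * / INR (fact k))) with (2 * (2 ^ k * ((K / 4) ^ k * / INR (fact k)))) by ring.
    apply Rmult_le_compat_l. lra.
    rewrite (Rmult_assoc (2 ^ k)). apply Rmult_le_compat; lra.
  - unfold Sb'. rewrite sum_scal_l. apply Rmult_le_compat_l. lra.
    apply sum_exp_le. lra.
Qed.

Lemma Sb_pos : 0 < Sb.
Proof. apply exp_pos. Qed.

Definition fp N s := csum (fun k => om k * RtoC (s ^ (2 * k)))%C N.
Definition fp1 N s := csum (fun k => om k * RtoC (INR (2 * k) * s ^ (pred (2 * k))))%C N.
Definition Yp N s := csum (fun k => om k * RtoC (INR (2 * k) * s ^ (2 * k + 2 * n)))%C N.
Definition Yp1 N s := csum (fun k => om k * RtoC (INR (2 * k) * (INR (2 * k + 2 * n) * s ^ (pred (2 * k + 2 * n)))))%C N.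

Lemma RD_pow j s : is_derive (fun t : R => t ^ j) s (INR j * s ^ pred j).
Proof. eapply is_derive_eq. apply (is_derive_pow (fun t => t) j s 1). apply (is_derive_id (K:=R_AbsRing)). simpl; ring. Qed.

Lemma CD_fp N s : is_derive (fp N) s (fp1 N s).
Proof.
  unfold fp, fp1.
  apply (CD_csum (fun k t => om k * RtoC (t ^ (2 * k)))%C (fun k t => om k * RtoC (INR (2 * k) * t ^ (pred (2 * k))))%C).
  intros k. apply CD_scal. apply CD_RtoC. apply RD_pow.
Qed.

Lemma CD_Yp N s : is_derive (Yp N) s (Yp1 N s).
Proof.
  unfold Yp, Yp1.
  apply (CD_csum (fun k t => om k * RtoC (INR (2 * k) * t ^ (2 * k + 2 * n)))%C
                 (fun k t => om k * RtoC (INR (2 * k) * (INR (2 * k + 2 * n) * t ^ (pred (2 * k + 2 * n)))))%C).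
  intros k. apply CD_scal. apply CD_RtoC. apply is_derive_scal. apply RD_pow.
Qed.

Lemma Yp_eq N s : Yp N s = (RtoC (s ^ (2 * n + 1)) * fp1 N s)%C.
Proof.
  unfold Yp, fp1. rewrite <- csum_scal. apply csum_ext. intros k _.
  destruct k.
  - simpl. ceq.
  - replace (pred (2 * S k)) with (S (2 * k)) by lia.
    replace (2 * S k + 2 * n)%nat with ((2 * n + 1) + S (2 * k))%nat by lia.
    rewrite pow_add. generalize (om (S k)). intros. ceq.
Qed.

Lemma Yp1_eq N s : Yp1 (S N) s = (- zz * RtoC (s ^ (2 * n + 1)) * fp N s)%C.
Proof.
  assert (Hk : forall k, (om (S k) * RtoC (INR (2 * S k) * (INR (2 * S k + 2 * n) * s ^ (pred (2 * S k + 2 * n))))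
     = - zz * RtoC (s ^ (2 * n + 1)) * (om k * RtoC (s ^ (2 * k))))%C).
  { intros k.
    transitivity (om (S k) * RtoC (4 * INR (S k) * INR (S k + n)) * RtoC (s ^ (2 * n + 1) * s ^ (2 * k)))%C.
    { replace (pred (2 * S k + 2 * n)) with (2 * n + 1 + 2 * k)%nat by lia. rewrite pow_add.
      replace (INR (2 * S k) * (INR (2 * S k + 2 * n) * (s ^ (2 * n + 1) * s ^ (2 * k))))
        with (4 * INR (S k) * INR (S k + n) * (s ^ (2 * n + 1) * s ^ (2 * k))).
      2:{ rewrite !mult_INR, !plus_INR, !mult_INR. simpl. ring. }
      generalize (om (S k)). intros. ceq. }
    rewrite om_rec. generalize zz (om k). intros. ceq. }
  induction N.
  - unfold Yp1, fp. simpl csum. rewrite Hk. simpl. ceq.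
  - change (Yp1 (S (S N)) s) with (Yp1 (S N) s + om (S (S N)) * RtoC (INR (2 * S (S N)) * (INR (2 * S (S N) + 2 * n) * s ^ (pred (2 * S (S N) + 2 * n)))))%C.
    rewrite IHN, Hk. change (fp (S N) s) with (fp N s + om (S N) * RtoC (s ^ (2 * S N)))%C. ring.
Qed.

End Bessel.

Lemma snd_le_Cmod (u : C) : Rabs (snd u) <= Cmod u.
Proof. eapply Rle_trans; [apply Rmax_r | apply Rmax_Cmod]. Qed.

Lemma Cmod_sq (u : C) : Cmod u ^ 2 = fst u ^ 2 + snd u ^ 2.
Proof. unfold Cmod. apply pow2_sqrt. nra. Qed.

Lemma Cmod_rev_tri (a b : C) : Cmod a - Cmod b <= Cmod (a + b)%C.
Proof.
  pose proof (Cmod_triangle (a + b)%C (- b)%C). rewrite Cmod_opp in H.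
  replace (a + b + - b)%C with a in H by ring. lra.
Qed.

Lemma pow_le_1 s j : 0 <= s <= 1 -> s ^ j <= 1.
Proof. intros H. rewrite <- (pow1 j). apply pow_incr. lra. Qed.

Section Energy.
Variables (K : R) (n : nat) (x0 : R).
Hypothesis HK : 0 < K.

Definition Zp N s := (Yp K n x0 N s * Cconj (fp K n x0 N s))%C.
Definition Zp1 N s := (Yp1 K n x0 N s * Cconj (fp K n x0 N s) + Yp K n x0 N s * Cconj (fp1 K n x0 N s))%C.

Lemma CD_Zp N s : is_derive (Zp N) s (Zp1 N s).
Proof.
  unfold Zp, Zp1. eapply is_derive_eqC. apply CD_mult. apply CD_Yp. apply CD_conj. apply CD_fp. reflexivity.
Qed.

Definition sz := snd (zz K x0).

Lemma Zp1_snd N s : sz * snd (Zp1 (S N) s) =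
  s ^ (2 * n + 1) * (- sz ^ 2 * (fst (fp K n x0 (S N) s) ^ 2 + snd (fp K n x0 (S N) s) ^ 2)
     + sz * snd (zz K x0 * (om K n x0 (S N) * RtoC (s ^ (2 * S N))) * Cconj (fp K n x0 (S N) s))%C).
Proof.
  unfold Zp1. rewrite Yp1_eq, Yp_eq.
  change (fp K n x0 (S N) s) with (fp K n x0 N s + om K n x0 (S N) * RtoC (s ^ (2 * S N)))%C.
  unfold sz. generalize (zz K x0) (fp K n x0 N s) (om K n x0 (S N)) (fp1 K n x0 (S N) s). intros.
  unfold Cconj, Cminus, Cplus, Cmult, Copp, RtoC; cbn [fst snd]. ring.
Qed.

Lemma Cmod_fp_le N s : 0 <= s <= 1 -> Cmod (fp K n x0 N s) <= Sb K.
Proof.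
  intros Hs. eapply Rle_trans. apply Cmod_csum. eapply Rle_trans. 2: apply (sum_dd K n HK N).
  apply sum_f_R0_le. intros k _. rewrite Cmod_mult, (Cmod_om K n x0 HK), Cmod_R.
  rewrite <- (Rmult_1_r (dd K n k)) at 2. apply Rmult_le_compat_l. left; apply dd_pos; auto.
  rewrite Rabs_right. apply pow_le_1; lra. apply Rle_ge, pow_le; lra.
  Unshelve. all: auto.
Qed.


Lemma sum_dd_tail N : sum_f_R0 (fun k => dd K n (S k)) N <= Sb K.
Proof.
  pose proof (sum_dd K n HK (S N)). rewrite sum_shift in H. pose proof (dd_pos K n 0 HK). lra.
Qed.

Lemma Cmod_fp_lower N s : 0 <= s <= 1 -> dd K n 0 - s ^ 2 * Sb K <= Cmod (fp K n x0 (S N) s).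
Proof.
  intros Hs. unfold fp. rewrite csum_shift.
  eapply Rle_trans. 2: apply Cmod_rev_tri.
  rewrite Cmod_mult, (Cmod_om K n x0 HK), Cmod_R. simpl (s ^ (2 * 0)). rewrite Rabs_R1, Rmult_1_r.
  apply Rplus_le_compat_l. apply Ropp_le_contravar.
  eapply Rle_trans. apply Cmod_csum.
  eapply Rle_trans. apply sum_f_R0_le with (g := fun k => s ^ 2 * dd K n (S k)).
  { intros k _. rewrite Cmod_mult, (Cmod_om K n x0 HK), Cmod_R, Rabs_right by (apply Rle_ge, pow_le; lra).
    replace (2 * S k)%nat with (2 + 2 * k)%nat by lia. rewrite pow_add.
    pose proof (pow_le_1 s (2 * k) Hs). pose proof (dd_pos K n (S k) HK). pose proof (pow_le s 2 (proj1 Hs)).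
    pose proof (pow_le s (2*k) (proj1 Hs)).
    replace (s ^ 2 * dd K n (S k)) with (dd K n (S k) * (s ^ 2 * 1)) by ring.
    apply Rmult_le_compat_l; [lra|]. apply Rmult_le_compat_l; lra. }
  rewrite sum_scal_l. apply Rmult_le_compat_l. apply pow_le; lra. apply sum_dd_tail.
Qed.

Lemma Yp_0 N : Yp K n x0 N 0 = RtoC 0.
Proof. rewrite Yp_eq. rewrite pow_i by lia. ring. Qed.

Lemma fp_1 N : fp K n x0 N 1 = phi K n N x0.
Proof. unfold fp, phi. apply csum_ext. intros k _. rewrite pow1. unfold om. ring. Qed.

Lemma Yp_1_plus N : (Ci * (Yp K n x0 N 1 + RtoC (INR n) * fp K n x0 N 1))%C = phi1 K n N x0.
Proof.
  unfold Yp, fp, phi1. rewrite <- csum_scal, <- csum_plus, <- csum_scal. apply csum_ext. intros k _.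
  rewrite !pow1. unfold om, pp. rewrite plus_INR. generalize (ee (INR (2 * k + n)) x0). intros. ceq.
Qed.

Lemma Cmod_Yp_1 N : Cmod (Yp K n x0 N 1) <= Sb' K.
Proof.
  eapply Rle_trans. apply Cmod_csum. eapply Rle_trans. 2: apply (sum_dd' K n HK N).
  apply sum_f_R0_le. intros k _. rewrite Cmod_mult, (Cmod_om K n x0 HK), Cmod_R, pow1, Rmult_1_r.
  rewrite Rabs_right by (apply Rle_ge, pos_INR). lra.
Qed.

Lemma hp1_eq N : snd (Zp N 1) = snd ((Yp K n x0 N 1 + RtoC (INR n) * fp K n x0 N 1) * Cconj (fp K n x0 N 1))%C.
Proof.
  unfold Zp. generalize (Yp K n x0 N 1) (fp K n x0 N 1). intros.
  unfold Cconj, Cminus, Cplus, Cmult, Copp, RtoC; cbn [fst snd]. ring.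
Qed.

Lemma Cmod_zz : Cmod (zz K x0) = K.
Proof. unfold zz. rewrite Cmod_mult, Cmod_R, Cmod_cexpi, Rabs_right by lra. ring. Qed.

Lemma energy_step N (Hsz : sz <> 0) :
  let d0 := dd K n 0 in let Sm := Sb K in
  let rho := d0 / (d0 + 2 * Sm) in
  let D := (rho / 2) ^ (2 * n + 1) * sz ^ 2 * (d0 / 2) ^ 2 in
  sz * snd (Zp (S N) 1) - sz * snd (Zp (S N) 0) <= Rabs sz * K * dd K n (S N) * Sm - D * (rho / 2).
Proof.
  intros d0 Sm rho D.
  assert (Hd0 : 0 < d0) by (apply dd_pos; auto).
  assert (HS : 0 < Sm) by apply Sb_pos.
  assert (Hrho : rho * (d0 + 2 * Sm) = d0) by (unfold rho; field; lra).
  assert (Hrho0 : 0 < rho) by (unfold rho; apply Rdiv_lt_0_compat; lra).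
  assert (Hrho1 : rho <= 1) by nra.
  assert (HrS : rho ^ 2 * Sm <= d0 / 2) by (simpl; nra).
  set (eps := Rabs sz * K * dd K n (S N) * Sm).
  assert (Heps : 0 <= eps).
  { unfold eps. pose proof (dd_pos K n (S N) HK). pose proof (Rabs_pos sz). apply Rmult_le_pos; [|lra].
    apply Rmult_le_pos; [|lra]. apply Rmult_le_pos; lra. }
  set (kf := fun s => sz * snd (Zp (S N) s)).
  set (kd := fun s => sz * snd (Zp1 (S N) s)).
  assert (Hder : forall s, is_derive kf s (kd s)).
  { intros s. unfold kf, kd. apply is_derive_scal. apply CD_snd. apply CD_Zp. }
  assert (Hest : forall s, 0 <= s <= 1 ->
     kd s = s ^ (2 * n + 1) * (- sz ^ 2 * Cmod (fp K n x0 (S N) s) ^ 2) + s ^ (2 * n + 1) * (sz * snd (zz K x0 * (om K n x0 (S N) * RtoC (s ^ (2 * S N))) * Cconj (fp K n x0 (S N) s))%C)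
     /\ sz * snd (zz K x0 * (om K n x0 (S N) * RtoC (s ^ (2 * S N))) * Cconj (fp K n x0 (S N) s))%C <= eps
     /\ 0 <= s ^ (2 * n + 1) <= 1).
  { intros s Hs. split; [|split].
    - unfold kd. rewrite Zp1_snd, Cmod_sq. ring.
    - unfold eps. replace (Rabs sz * K * dd K n (S N) * Sm) with (Rabs sz * (K * dd K n (S N) * Sm)) by ring.
      eapply Rle_trans. apply Rle_abs. rewrite Rabs_mult. apply Rmult_le_compat_l. apply Rabs_pos.
      eapply Rle_trans. apply snd_le_Cmod. rewrite !Cmod_mult, Cmod_zz, (Cmod_om K n x0 HK), Cmod_conj, Cmod_R.
      pose proof (Cmod_fp_le (S N) s Hs). pose proof (Cmod_ge_0 (fp K n x0 (S N) s)).
      pose proof (dd_pos K n (S N) HK).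
      assert (Rabs (s ^ (2 * S N)) <= 1) by (rewrite Rabs_right; [apply pow_le_1; lra| apply Rle_ge, pow_le; lra]).
      pose proof (Rabs_pos (s ^ (2 * S N))).
      replace (K * dd K n (S N) * Sm) with (K * (dd K n (S N) * 1) * Sm) by ring.
      apply Rmult_le_compat. apply Rmult_le_pos; [lra|]. apply Rmult_le_pos; lra. lra.
      apply Rmult_le_compat_l. lra. apply Rmult_le_compat_l; lra. auto.
    - split. apply pow_le; lra. apply pow_le_1; lra. }
  assert (B1 : forall s, 0 <= s <= 1 -> kd s <= eps).
  { intros s Hs. destruct (Hest s Hs) as [E [H1 H2]]. rewrite E.
    pose proof (pow2_ge_0 sz). pose proof (pow2_ge_0 (Cmod (fp K n x0 (S N) s))).
    assert (s ^ (2 * n + 1) * (- sz ^ 2 * Cmod (fp K n x0 (S N) s) ^ 2) <= 0).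
    { rewrite <- Ropp_mult_distr_l, <- Ropp_mult_distr_r. assert (0 <= s ^ (2*n+1) * (sz^2 * Cmod (fp K n x0 (S N) s) ^ 2)) by (apply Rmult_le_pos; [lra| apply Rmult_le_pos; lra]). lra. }
    assert (s ^ (2 * n + 1) * (sz * snd (zz K x0 * (om K n x0 (S N) * RtoC (s ^ (2 * S N))) * Cconj (fp K n x0 (S N) s))%C) <= 1 * eps).
    { destruct (Rle_dec 0 (sz * snd (zz K x0 * (om K n x0 (S N) * RtoC (s ^ (2 * S N))) * Cconj (fp K n x0 (S N) s))%C)).
      apply Rmult_le_compat; lra. nra. }
    lra. }
  assert (B2 : forall s, rho / 2 <= s <= rho -> kd s <= eps - D).
  { intros s Hs. assert (Hs' : 0 <= s <= 1) by lra. destruct (Hest s Hs') as [E [H1 H2]]. rewrite E.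
    pose proof (Cmod_fp_lower N s Hs').
    assert (s ^ 2 <= rho ^ 2) by (apply pow_incr; lra).
    assert (d0 / 2 <= Cmod (fp K n x0 (S N) s)) by (fold d0 Sm in H; nra).
    assert ((d0/2) ^ 2 <= Cmod (fp K n x0 (S N) s) ^ 2) by (apply pow_incr; lra).
    assert ((rho/2) ^ (2 * n + 1) <= s ^ (2 * n + 1)) by (apply pow_incr; lra).
    assert (0 <= (rho/2) ^ (2 * n + 1)) by (apply pow_le; lra).
    pose proof (pow2_ge_0 sz).
    assert (D <= s ^ (2 * n + 1) * (sz ^ 2 * Cmod (fp K n x0 (S N) s) ^ 2)).
    { unfold D. rewrite Rmult_assoc. apply Rmult_le_compat; auto. apply Rmult_le_pos; [lra| apply pow_le; lra].
      apply Rmult_le_compat_l; lra. }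
    assert (s ^ (2 * n + 1) * (sz * snd (zz K x0 * (om K n x0 (S N) * RtoC (s ^ (2 * S N))) * Cconj (fp K n x0 (S N) s))%C) <= 1 * eps).
    { destruct (Rle_dec 0 (sz * snd (zz K x0 * (om K n x0 (S N) * RtoC (s ^ (2 * S N))) * Cconj (fp K n x0 (S N) s))%C)).
      apply Rmult_le_compat; lra. nra. }
    rewrite <- Ropp_mult_distr_l, <- Ropp_mult_distr_r. lra. }
  pose proof (R_MVT_le kf kd 0 (rho/2) eps ltac:(lra) Hder ltac:(intros; apply B1; lra)) as M1.
  pose proof (R_MVT_le kf kd (rho/2) rho (eps - D) ltac:(lra) Hder ltac:(intros; apply B2; lra)) as M2.
  pose proof (R_MVT_le kf kd rho 1 eps ltac:(lra) Hder ltac:(intros; apply B1; lra)) as M3.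
  unfold kf in *. nra.
Qed.

Lemma energy (Hsz : sz <> 0) (C2 : R) (HC2 : forall N, Rabs (snd (Zp (S N) 1)) <= C2 * dd K n (S N)) : False.
Proof.
  set (d0 := dd K n 0). set (Sm := Sb K).
  set (rho := d0 / (d0 + 2 * Sm)).
  set (D := (rho / 2) ^ (2 * n + 1) * sz ^ 2 * (d0 / 2) ^ 2).
  assert (Hd0 : 0 < d0) by (apply dd_pos; auto).
  assert (HS : 0 < Sm) by apply Sb_pos.
  assert (Hrho0 : 0 < rho) by (unfold rho; apply Rdiv_lt_0_compat; lra).
  assert (HD : 0 < D).
  { unfold D. apply Rmult_lt_0_compat. apply Rmult_lt_0_compat. apply pow_lt; lra.
    apply pow2_gt_0; auto. apply pow2_gt_0; lra. }
  assert (Hkey : forall N, D * (rho / 2) <= Rabs sz * (K * Sm + Rabs C2) * dd K n (S N)).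
  { intros N. pose proof (energy_step N Hsz) as H. cbv zeta in H. fold d0 Sm in H. fold rho in H. fold D in H.
    assert (Z0 : snd (Zp (S N) 0) = 0).
    { unfold Zp. rewrite Yp_0. simpl. ring. }
    rewrite Z0, Rmult_0_r in H.
    pose proof (HC2 N). pose proof (dd_pos K n (S N) HK).
    assert (- (Rabs sz * (C2 * dd K n (S N))) <= sz * snd (Zp (S N) 1)).
    { pose proof (Rabs_pos sz). pose proof (Rle_abs (- (sz * snd (Zp (S N) 1)))).
      rewrite Rabs_Ropp, Rabs_mult in H3. pose proof (Rabs_pos (snd (Zp (S N) 1))).
      assert (Rabs sz * Rabs (snd (Zp (S N) 1)) <= Rabs sz * (C2 * dd K n (S N))) by (apply Rmult_le_compat_l; auto).
      lra. }
    assert (C2 <= Rabs C2) by apply Rle_abs.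
    pose proof (Rabs_pos sz).
    assert (Rabs sz * (C2 * dd K n (S N)) <= Rabs sz * (Rabs C2 * dd K n (S N))) by (apply Rmult_le_compat_l; [lra|]; apply Rmult_le_compat_r; lra).
    nra. }
  set (A := Rabs sz * (K * Sm + Rabs C2) + 1).
  assert (HA : 0 < A). { unfold A. pose proof (Rabs_pos sz). pose proof (Rabs_pos C2). assert (0 <= Rabs sz * (K * Sm + Rabs C2)) by (apply Rmult_le_pos; nra). lra. }
  destruct (cv_speed_pow_fact (K/4) (D * (rho / 2) / A)) as [N0 HN0].
  { apply Rlt_gt. apply Rdiv_lt_0_compat; [|lra]. apply Rmult_lt_0_compat; lra. }
  specialize (HN0 (S N0) ltac:(lia)). unfold Rdist in HN0. rewrite Rminus_0_r in HN0.
  pose proof (dd_le K n HK (S N0)). pose proof (dd_pos K n (S N0) HK).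
  assert (dd K n (S N0) < D * (rho / 2) / A) by (eapply Rle_lt_trans; [|eapply Rle_lt_trans; [apply Rle_abs|exact HN0]]; lra).
  pose proof (Hkey N0).
  assert (Rabs sz * (K * Sm + Rabs C2) * dd K n (S N0) <= (A - 1) * dd K n (S N0)) by (unfold A; lra).
  assert (A * dd K n (S N0) < D * (rho / 2)).
  { apply (Rmult_lt_compat_l A) in H1; auto. unfold Rdiv in H1. rewrite (Rmult_comm (D * (rho/2))), <- Rmult_assoc, Rinv_r, Rmult_1_l in H1 by lra. lra. }
  nra.
Qed.
End Energy.

Lemma small_dd K n (HK : 0 < K) C delta : 0 < delta -> exists N, C * dd K n (S N) < delta.
Proof.
  intros Hd.
  set (A := Rabs C + 1).
  destruct (cv_speed_pow_fact (K/4) (delta / A)) as [N0 HN0].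
  { apply Rlt_gt. apply Rdiv_lt_0_compat; [lra|]. unfold A; pose proof (Rabs_pos C); lra. }
  exists N0. specialize (HN0 (S N0) ltac:(lia)). unfold Rdist in HN0. rewrite Rminus_0_r in HN0.
  pose proof (dd_le K n HK (S N0)). pose proof (dd_pos K n (S N0) HK).
  assert (dd K n (S N0) < delta / A) by (eapply Rle_lt_trans; [|eapply Rle_lt_trans; [apply Rle_abs|exact HN0]]; lra).
  assert (HA : 0 < A) by (unfold A; pose proof (Rabs_pos C); lra).
  assert (A * dd K n (S N0) < delta).
  { apply (Rmult_lt_compat_l A) in H1; auto. unfold Rdiv in H1. rewrite (Rmult_comm delta), <- Rmult_assoc, Rinv_r, Rmult_1_l in H1 by lra. lra. }
  assert (C * dd K n (S N0) <= Rabs C * dd K n (S N0)) by (apply Rmult_le_compat_r; [lra| apply Rle_abs]).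
  unfold A in H2. lra.
Qed.

Lemma cexpi_nat_mul j t : cexpi (INR j * t) = Cpow (cexpi t) j.
Proof.
  induction j. simpl. rewrite Rmult_0_l. apply cexpi_0.
  rewrite S_INR, Rmult_plus_distr_r, Rmult_1_l, cexpi_add, IHj. simpl. ring.
Qed.

Lemma csum_RtoC (g : nat -> R) N : csum (fun k => RtoC (g k)) N = RtoC (sum_f_R0 g N).
Proof. induction N; simpl. reflexivity. rewrite IHN. ceq. Qed.

Lemma csum_mult_r f c N : csum (fun k => Cmult (f k) c) N = Cmult (csum f N) c.
Proof. induction N; simpl. reflexivity. rewrite IHN. ring. Qed.

Lemma sum_ge_first (f : nat -> R) N : (forall k, 0 <= f k) -> f O <= sum_f_R0 f N.
Proof. intros H. induction N; simpl. lra. specialize (H (S N)). lra. Qed.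

Lemma Ci_pow_even k : Cpow Ci (2 * k) = RtoC ((-1)^k).
Proof. rewrite Cpow_mult_r. replace (Cpow Ci 2) with (RtoC (-1)) by (simpl; ceq). rewrite RtoC_pow. reflexivity. Qed.

Lemma Cmod_Ci_pow j : Cmod (Cpow Ci j) = 1.
Proof. rewrite Cmod_pow, Cmod_Ci. apply pow1. Qed.

Section Final.
Variables (K : R) (n : nat) (x0 : R).
Hypothesis HK : 0 < K.
Hypothesis Hx0 : 0 < x0 < PI.

Lemma ee_half (Hc : cos x0 = 0) k : ee (pp n k) x0 = (RtoC ((-1)^k) * Cpow Ci n)%C.
Proof.
  assert (Hs : sin x0 = 1).
  { pose proof (sin_gt_0 x0 (proj1 Hx0) (proj2 Hx0)). pose proof (sin2_cos2 x0). unfold Rsqr in H0. rewrite Hc in H0. nra. }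
  assert (E : cexpi x0 = Ci) by (unfold cexpi; rewrite Hc, Hs; reflexivity).
  unfold ee, pp. rewrite cexpi_nat_mul, E, Cpow_add_r, Ci_pow_even. reflexivity.
Qed.

Lemma m1sq k : (-1)^k * (-1)^k = 1.
Proof. rewrite <- Rpow_mult_distr. replace (-1 * -1) with 1 by ring. apply pow1. Qed.

Lemma phi_half (Hc : cos x0 = 0) N : phi K n N x0 = (RtoC (sum_f_R0 (dd K n) N) * Cpow Ci n)%C.
Proof.
  rewrite <- csum_RtoC, <- csum_mult_r. unfold phi. apply csum_ext. intros k _.
  rewrite ee_half by auto. unfold cc.
  transitivity (RtoC ((-1)^k * (-1)^k * dd K n k)%R * Cpow Ci n)%C.
  { generalize (Cpow Ci n). intros. ceq. }
  rewrite m1sq, Rmult_1_l. reflexivity.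
Qed.

Lemma phi1_half (Hc : cos x0 = 0) N : phi1 K n N x0 = (RtoC (sum_f_R0 (fun k => pp n k * dd K n k)%R N) * (Ci * Cpow Ci n))%C.
Proof.
  rewrite <- csum_RtoC, <- csum_mult_r. unfold phi1. apply csum_ext. intros k _.
  rewrite ee_half by auto. unfold cc.
  transitivity (RtoC ((-1)^k * (-1)^k * (pp n k * dd K n k))%R * (Ci * Cpow Ci n))%C.
  { generalize (Cpow Ci n). intros. ceq. }
  rewrite m1sq, Rmult_1_l. reflexivity.
Qed.

Lemma sz_ne0 (Hc : cos x0 <> 0) : sz K x0 <> 0.
Proof.
  unfold sz, zz, cexpi. simpl. rewrite sin_2a.
  pose proof (sin_gt_0 x0 (proj1 Hx0) (proj2 Hx0)).
  intro E. assert (K * (2 * sin x0 * cos x0) = 0) by lra.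
  apply Rmult_integral in H0. destruct H0. lra.
  apply Rmult_integral in H0. destruct H0. apply Rmult_integral in H0. destruct H0; lra. auto.
Qed.

Lemma bessel_D : ~ (exists Cst, forall N, Cmod (phi K n N x0) <= Cst * Rabs (cc K n N)).
Proof.
  intros [Cst HC].
  destruct (Req_dec (cos x0) 0) as [Hc | Hc].
  - destruct (small_dd K n HK Cst (dd K n 0)) as [N HN]. apply dd_pos; auto.
    specialize (HC (S N)). rewrite phi_half, Cmod_mult, Cmod_R, Cmod_Ci_pow, (Rabs_cc K n HK) in HC by auto.
    pose proof (sum_ge_first (dd K n) (S N) (fun k => Rlt_le _ _ (dd_pos K n k HK))).
    rewrite Rabs_right in HC. lra. apply Rle_ge, sum_f_R0_nonneg. intros; left; apply dd_pos; auto.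
  - apply (energy K n x0 HK (sz_ne0 Hc) (Sb' K * Cst)).
    intros N. unfold Zp. eapply Rle_trans. apply snd_le_Cmod.
    rewrite Cmod_mult, Cmod_conj, fp_1.
    specialize (HC (S N)). rewrite (Rabs_cc K n HK) in HC.
    pose proof (Cmod_Yp_1 K n x0 HK (S N)). pose proof (Cmod_ge_0 (Yp K n x0 (S N) 1)).
    pose proof (Cmod_ge_0 (phi K n (S N) x0)).
    rewrite Rmult_assoc. apply Rmult_le_compat; auto.
Qed.

Lemma bessel_N : ~ (exists Cst, forall N, Cmod (phi1 K n N x0) <= Cst * Rabs (cc K n N)).
Proof.
  intros [Cst HC].
  destruct (Req_dec (cos x0) 0) as [Hc | Hc].
  - assert (Hp1 : 0 < pp n 1 * dd K n 1).
    { apply Rmult_lt_0_compat. unfold pp. apply lt_0_INR. lia. apply dd_pos; auto. }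
    destruct (small_dd K n HK Cst (pp n 1 * dd K n 1)) as [N HN]; auto.
    specialize (HC (S N)). rewrite phi1_half, Cmod_mult, Cmod_R, Cmod_mult, Cmod_Ci, Cmod_Ci_pow, (Rabs_cc K n HK) in HC by auto.
    assert (Hnn : forall k, 0 <= pp n k * dd K n k).
    { intros k. apply Rmult_le_pos. apply pos_INR. left; apply dd_pos; auto. }
    rewrite sum_shift in HC.
    pose proof (sum_ge_first (fun k => pp n (S k) * dd K n (S k)) N (fun k => Hnn (S k))).
    pose proof (Hnn 0%nat).
    rewrite Rabs_right in HC. lra.
    apply Rle_ge. pose proof (sum_f_R0_nonneg _ N (fun k => Hnn (S k))). lra.
  - apply (energy K n x0 HK (sz_ne0 Hc) (Cst * Sb K)).
    intros N. rewrite hp1_eq. eapply Rle_trans. apply snd_le_Cmod.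
    rewrite Cmod_mult, Cmod_conj.
    assert (E : Cmod (Yp K n x0 (S N) 1 + RtoC (INR n) * fp K n x0 (S N) 1)%C = Cmod (phi1 K n (S N) x0)).
    { rewrite <- Yp_1_plus, Cmod_mult, Cmod_Ci. ring. }
    rewrite E.
    specialize (HC (S N)). rewrite (Rabs_cc K n HK) in HC.
    pose proof (Cmod_fp_le K n x0 HK (S N) 1 ltac:(lra)).
    pose proof (Cmod_ge_0 (fp K n x0 (S N) 1)).
    pose proof (Cmod_ge_0 (phi1 K n (S N) x0)).
    replace (Cst * Sb K * dd K n (S N)) with ((Cst * dd K n (S N)) * Sb K) by ring.
    apply Rmult_le_compat; auto.
Qed.

End Final.

Theorem theorem6p7 (K : R) (HK : 0 < K) (x0 : R) (Hx0 : 0 < x0 < PI) (m : nat) :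
  ~ dirichlet_eigenvalue K x0 (E m) /\ ~ neumann_eigenvalue K x0 (E m).
Proof.
  set (n := (S m / 2)%nat).
  assert (HE : E m = lam n) by reflexivity.
  rewrite HE. split.
  - intros [psi [d1 [d2 [[Hsol [Hp0 Hd0]] HpP]]]].
    apply (bessel_D K n x0 HK Hx0).
    apply (fourier_D K n psi d1 d2 x0 HK (proj1 Hx0) Hsol); auto.
  - intros [psi [d1 [d2 [[Hsol [Hp0 Hd0]] HdP]]]].
    apply (bessel_N K n x0 HK Hx0).
    apply (fourier_N K n psi d1 d2 x0 HK (proj1 Hx0) Hsol); auto.
Qed.
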